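(* Let $n\ge0$ and set $\xi_0=1$, $\xi_{n+2}=-1$, and $\xi_k=\cos\frac{(2k-1)\pi}{2n+2}$ for $1\le k\le n+1$. Then $1=\xi_0>\xi_1>\cdots>\xi_{n+1}>\xi_{n+2}=-1$, and for each $1\le k\le n+1$ the polynomial $S_{2n+1}(x)$ has exactly one zero in $(\xi_{k+1},\xi_k)$. These $n+1$ zeros together with $x=1$ are all the zeros of $S_{2n+1}(x)$, and all of them are simple.
   Context: $U_n(x)$ is the Chebyshev polynomial of the second kind ($U_n(\cos\theta)=\sin((n+1)\theta)/\sin\theta$), with $U_{-1}=0$. For $n\ge0$, $S_{2n+1}(x)=2(2nx^2+2x^2+2nx-x-1)U_n(x)-2(2nx+3x+2n+1)U_{n-1}(x)$, a polynomial of degree $n+2$. *)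

(* Defs.v *)
From HB Require Import structures.
From mathcomp Require Import all_boot all_order all_algebra.
From mathcomp Require Import all_classical all_reals all_analysis.
Set Implicit Arguments. Unset Strict Implicit. Unset Printing Implicit Defensive.
Import Order.TTheory GRing.Theory Num.Theory.
Local Open Scope ring_scope.

(* Ushift m = U_{m-1}: Ushift 0 = U_{-1} = 0, Ushift 1 = U_0 = 1,
   U_{m+1} = 2 X U_m - U_{m-1}  (the standard Chebyshev recurrence, equivalent
   to U_n(cos t) = sin((n+1)t)/sin t). *)
Fixpoint Ushift (R : nzRingType) (m : nat) : {poly R} :=
  match m with
  | 0%N => 0
  | k.+1 =>
      match k with
      | 0%N => 1
      | j.+1 => 2%:P * 'X * Ushift R k - Ushift R j
      end
  end.

Definition chebU (R : nzRingType) (n : nat) : {poly R} := Ushift R n.+1.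
Definition chebUm1 (R : nzRingType) (n : nat) : {poly R} := Ushift R n.

Definition S_odd (R : nzRingType) (n : nat) : {poly R} :=
  2%:P * ((2 * n%:R)%:P * 'X^2 + 2%:P * 'X^2 + (2 * n%:R)%:P * 'X - 'X - 1)
    * chebU R n
  - 2%:P * ((2 * n%:R)%:P * 'X + 3%:P * 'X + (2 * n%:R + 1)%:P) * chebUm1 R n.

Definition xi (R : realType) (n k : nat) : R :=
  if k == 0%N then 1
  else if (k <= n.+1)%N then cos (((2 * k)%:R - 1) * pi / (2 * n%:R + 2))
  else -1.

(* Main.v *)
Require Import Defs.
From HB Require Import structures.
From mathcomp Require Import all_boot all_order all_algebra.
From mathcomp Require Import all_classical all_reals all_analysis.
From mathcomp Require Import ring lra zify.
Import Order.TTheory GRing.Theory Num.Theory.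
Import numFieldNormedType.Exports.
Local Open Scope ring_scope.

Set Implicit Arguments. Unset Strict Implicit.
Section S.
Variable R : realType.

Lemma Ushift_SS m : Ushift R m.+2 = 2%:P * 'X * Ushift R m.+1 - Ushift R m.
Proof. by []. Qed.

Lemma U_cos m t : (Ushift R m).[cos t] * sin t = sin (m%:R * t).
Proof.
suff : (Ushift R m).[cos t] * sin t = sin (m%:R * t) /\
       (Ushift R m.+1).[cos t] * sin t = sin (m.+1%:R * t) by case.
elim: m => [|m [IH1 IH2]].
  by rewrite /= !hornerE sin0.
split => //.
rewrite Ushift_SS !hornerE.
transitivity (2 * cos t * ((Ushift R m.+1).[cos t] * sin t) - (Ushift R m).[cos t] * sin t); first ring.
rewrite IH2 IH1.
have -> : m%:R * t = m.+1%:R * t - t by rewrite -natr1 mulrDl mul1r addrK.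
have -> : m.+2%:R * t = m.+1%:R * t + t by rewrite -(@natr1 _ m.+1) mulrDl mul1r.
rewrite sinB sinD; ring.
Qed.

Lemma U_one m : (Ushift R m).[1] = m%:R.
Proof.
suff : (Ushift R m).[1] = m%:R /\ (Ushift R m.+1).[1] = m.+1%:R by case.
elim: m => [|m [IH1 IH2]]; first by rewrite /= !hornerE.
split => //.
rewrite Ushift_SS !hornerE IH2 IH1 -!natr1; ring.
Qed.

Lemma U_mone m : (Ushift R m).[-1] = (-1) ^+ m.+1 * m%:R.
Proof.
suff : (Ushift R m).[-1] = (-1) ^+ m.+1 * m%:R /\
   (Ushift R m.+1).[-1] = (-1) ^+ m.+2 * m.+1%:R by case.
elim: m => [|m [IH1 IH2]]; first by rewrite /= !hornerE expr2 mulN1r opprK.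
split => //.
rewrite Ushift_SS !hornerE IH2 IH1 -!natr1 !exprS; ring.
Qed.

Lemma size_leM (p q : {poly R}) a b : (size p <= a)%N -> (size q <= b)%N ->
  (size (p * q)%R <= (a + b).-1)%N.
Proof. move=> ha hb; have := @size_polyMleq _ p q; lia. Qed.

Lemma sX : (size ('X : {poly R}) <= 2)%N.
Proof. by rewrite size_polyX. Qed.

Lemma size_U m : (size (Ushift R m) <= m)%N.
Proof.
suff : (size (Ushift R m) <= m)%N /\ (size (Ushift R m.+1) <= m.+1)%N by case.
elim: m => [|m [IH1 IH2]]; first by rewrite /= size_poly0 size_poly1.
split => //.
rewrite Ushift_SS.
have h1 : (size (2%:P * 'X * Ushift R m.+1)%R <= m.+2)%N.
  by apply: leq_trans (size_leM (size_leM (size_polyC_leq1 (2:R)) sX) IH2) _.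
apply: leq_trans (size_polyD _ _) _; rewrite size_polyN geq_max h1 /=; exact: leq_trans IH1 (leqW (leqnSn m)).
Qed.

Lemma sD (p q : {poly R}) k : (size p <= k)%N -> (size q <= k)%N -> (size (p + q)%R <= k)%N.
Proof. move=> hp hq; apply: leq_trans (size_polyD _ _) _; by rewrite geq_max hp hq. Qed.
Lemma sB (p q : {poly R}) k : (size p <= k)%N -> (size q <= k)%N -> (size (p - q)%R <= k)%N.
Proof. move=> hp hq; apply: sD => //; by rewrite size_polyN. Qed.
Lemma sCM (c : R) (p : {poly R}) k : (size p <= k)%N -> (size (c%:P * p)%R <= k)%N.
Proof. move=> hp; apply: leq_trans (size_leM (size_polyC_leq1 c) hp) _; lia. Qed.
Lemma sXk k : (2 <= k)%N -> (size ('X : {poly R}) <= k)%N.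
Proof. by rewrite size_polyX. Qed.
Lemma sXnk j k : (j < k)%N -> (size ('X^j : {poly R}) <= k)%N.
Proof. by rewrite size_polyXn. Qed.
Lemma sCk (c : R) k : (1 <= k)%N -> (size (c%:P) <= k)%N.
Proof. move=> h; exact: leq_trans (size_polyC_leq1 c) h. Qed.
Lemma s1k k : (1 <= k)%N -> (size (1%R : {poly R}) <= k)%N.
Proof. by rewrite size_poly1. Qed.

Lemma size_S n : (size (S_odd R n) <= n.+3)%N.
Proof.
rewrite /S_odd /chebU /chebUm1.
apply: sB.
  apply: leq_trans (size_leM (sCM 2 (_ : (size (_ : {poly R}) <= 3)%N)) (size_U n.+1)) _; last by lia.
  by repeat first [apply: sB | apply: sD | apply: sCM | apply: sXk | apply: sXnk | apply: sCk | apply: s1k].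
apply: leq_trans (size_leM (sCM 2 (_ : (size (_ : {poly R}) <= 2)%N)) (size_U n)) _; last by lia.
by repeat first [apply: sB | apply: sD | apply: sCM | apply: sXk | apply: sXnk | apply: sCk | apply: s1k].
Qed.


Lemma sinDnpi j a : sin (j%:R * pi + a) = (-1) ^+ j * sin a :> R.
Proof.
elim: j => [|j IH]; first by rewrite mul0r add0r expr0 mul1r.
have -> : j.+1%:R * pi + a = (j%:R * pi + a) + pi by rewrite -natr1 mulrDl mul1r addrAC.
by rewrite sinDpi IH exprS; ring.
Qed.

Lemma cosDnpi j a : cos (j%:R * pi + a) = (-1) ^+ j * cos a :> R.
Proof.
elim: j => [|j IH]; first by rewrite mul0r add0r expr0 mul1r.
have -> : j.+1%:R * pi + a = (j%:R * pi + a) + pi by rewrite -natr1 mulrDl mul1r addrAC.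
by rewrite cosDpi IH exprS; ring.
Qed.

Definition th n k : R := ((2 * k)%:R - 1) * pi / (2 * n%:R + 2).

Lemma xi_cos n k : (1 <= k <= n.+1)%N -> xi R n k = cos (th n k).
Proof. by case: k => // k /andP[_ h]; rewrite /xi /= h. Qed.

Lemma den_gt0 n : 0 < 2 * n%:R + 2 :> R.
Proof. have : 0 <= n%:R :> R by []. lra. Qed.

Lemma th_gt0 n k : (1 <= k)%N -> 0 < th n k.
Proof.
move=> hk; rewrite /th natrM; have : 1 <= k%:R :> R by rewrite ler1n.
move=> h1; apply: divr_gt0; last exact: den_gt0.
apply: mulr_gt0; last exact: pi_gt0. lra.
Qed.

Lemma th_ltpi n k : (k <= n.+1)%N -> th n k < pi.
Proof.
move=> hk; rewrite /th natrM ltr_pdivrMr ?den_gt0 //.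
have : k%:R <= n%:R + 1 :> R by rewrite natr1 ler_nat.
have := pi_gt0 R. nra.
Qed.

Lemma th_incr n k : th n k < th n k.+1.
Proof.
have -> : th n k.+1 = th n k + 2 * pi / (2 * n%:R + 2).
  by rewrite /th !natrM -natr1; ring.
rewrite ltrDl; apply: divr_gt0; last exact: den_gt0.
by rewrite mulr_gt0 ?pi_gt0.
Qed.

Lemma th_mul n j : n.+1%:R * th n j.+1 = j%:R * pi + pi / 2.
Proof.
rewrite /th natrM -!natr1; field.
by have := den_gt0 n; lra.
Qed.


Lemma sign_sq j : (-1) ^+ j * (-1) ^+ j = 1 :> R.
Proof. by rewrite -exprD -signr_odd oddD addbb. Qed.

Lemma S_one n : (S_odd R n).[1] = 0.
Proof. rewrite /S_odd /chebU /chebUm1 !(hornerD, hornerN, hornerM, hornerC, hornerX, hornerXn) !U_one -(@natr1 _ n). ring. Qed.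

Lemma S_mone n : (S_odd R n).[-1] = 4 * (-1) ^+ n.
Proof. rewrite /S_odd /chebU /chebUm1 !(hornerD, hornerN, hornerM, hornerC, hornerX, hornerXn) !U_mone -!natr1 !exprS; ring. Qed.

Lemma S_xi_sign n k : (1 <= k <= n.+2)%N -> 0 < (S_odd R n).[xi R n k] * (-1) ^+ k.
Proof.
move=> /andP[hk1 hk2].
case: (ltnP k n.+2) => hk.
  case: k hk1 hk2 hk => // j _ _ hj.
  rewrite xi_cos ?hj //.
  set t := th n j.+1.
  have ht0 : 0 < t by apply: th_gt0.
  have htp : t < pi by apply: th_ltpi.
  have hs : 0 < sin t by apply: sin_gt0_pi; rewrite ht0 htp.
  have hx : -1 < cos t.
    have ht : t \in `[0, pi] by rewrite in_itv /= (ltW ht0) (ltW htp).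
    have hp : (pi : R) \in `[0, pi] by rewrite in_itv /= pi_ge0 lexx.
    by rewrite -cospi ltr_cos.
  have hU : (Ushift R n.+1).[cos t] * sin t = (-1) ^+ j.
    by rewrite U_cos th_mul sinDnpi sin_pihalf mulr1.
  have hV : (Ushift R n).[cos t] * sin t = (-1) ^+ j * cos t.
    rewrite U_cos.
    have -> : n%:R * t = n.+1%:R * t - t by rewrite -natr1 mulrDl mul1r addrK.
    by rewrite sinB th_mul sinDnpi cosDnpi sin_pihalf cos_pihalf; ring.
  have e : (S_odd R n).[cos t] * (-1) ^+ j.+1 * sin t = 2 * (cos t + 1) ^+ 2.
    rewrite /S_odd /chebU /chebUm1 !(hornerD, hornerN, hornerM, hornerC, hornerX, hornerXn).
    transitivity (2 * (2 * n%:R * cos t ^+ 2 + 2 * cos t ^+ 2 + 2 * n%:R * cos t - cos t - 1)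
      * ((Ushift R n.+1).[cos t] * sin t) * (-1) ^+ j.+1 - 2 * (2 * n%:R * cos t + 3 * cos t + (2 * n%:R + 1))
      * ((Ushift R n).[cos t] * sin t) * (-1) ^+ j.+1); first ring.
    rewrite hU hV [(-1) ^+ j.+1]exprS.
    transitivity (2 * (cos t + 1) ^+ 2 * ((-1) ^+ j * (-1) ^+ j)); first ring.
    by rewrite sign_sq mulr1.
  have : 0 < (S_odd R n).[cos t] * (-1) ^+ j.+1 * sin t.
    by rewrite e; apply: mulr_gt0 => //; apply: exprn_gt0; lra.
  by rewrite pmulr_lgt0.
have -> : k = n.+2 by apply/eqP; rewrite eqn_leq hk2 hk.
rewrite /xi /= ltnn S_mone.
have -> : 4 * (-1) ^+ n * (-1) ^+ n.+2 = 4 :> R.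
  rewrite !exprS; transitivity (4 * ((-1) ^+ n * (-1) ^+ n) : R); first ring.
  by rewrite sign_sq mulr1.
lra.
Qed.


Lemma th_in n k : (1 <= k <= n.+1)%N -> th n k \in `[0, pi].
Proof.
move=> /andP[h1 h2]; rewrite in_itv /= (ltW (th_gt0 n h1)) /=.
exact/ltW/th_ltpi.
Qed.

Lemma pi_in : (pi : R) \in `[0, pi].
Proof. by rewrite in_itv /= pi_ge0 lexx. Qed.

Lemma zero_in : (0 : R) \in `[0, pi].
Proof. by rewrite in_itv /= pi_ge0 lexx. Qed.

Lemma xi_chain n k : (k <= n.+1)%N -> xi R n k.+1 < xi R n k.
Proof.
move=> hk.
case: k hk => [|k] hk.
  rewrite [xi R n 0]/xi /= -cos0 xi_cos //.
  by rewrite ltr_cos ?th_in ?zero_in // th_gt0.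
case: (ltnP k n) => hkn.
  rewrite !xi_cos ?hkn ?(ltnW hkn) ?ltnS //.
  by rewrite ltr_cos ?th_in ?th_incr // ?ltnS ?hkn // ltnW.
have -> : k = n by apply/eqP; rewrite eqn_leq hkn -ltnS hk.
rewrite [xi R n n.+2]/xi /= ltnn -cospi xi_cos ?leqnn //.
by rewrite ltr_cos ?th_in ?pi_in ?leqnn // th_ltpi.
Qed.

Lemma xi_anti n i j : (i <= j <= n.+2)%N -> xi R n j <= xi R n i.
Proof.
elim: j => [|j IH]; first by rewrite leqn0 => /andP[/eqP -> _].
move=> /andP[hij hj]; rewrite leq_eqVlt in hij; case/orP: hij => [/eqP -> //|hij].
apply: le_trans (IH _); first exact/ltW/xi_chain.
by rewrite -ltnS hij ltnW.
Qed.

Lemma poly_ivt_open (p : {poly R}) (a b : R) : a < b -> p.[a] * p.[b] < 0 ->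
  exists x, a < x < b /\ root p x.
Proof.
move=> hab hp.
have [c hc hpc] : exists2 c, c \in `[a, b] & p.[c] = 0.
  apply: IVT; first exact: ltW.
    by apply/continuous_subspaceT => ?; exact: continuous_horner.
  rewrite ge_min le_max.
  have [ha|ha] := lerP p.[a] 0.
    have hb : 0 <= p.[b] by nra.
    by apply/andP; split; apply/orP; [left|right].
  by apply/andP; split; apply/orP; [right; nra|left; exact: ltW].
exists c; split; last by apply/eqP.
move: hc; rewrite in_itv /= => /andP[h1 h2].
rewrite !lt_neqAle h1 h2 !andbT.
apply/andP; split; apply/eqP => e; move: hp.
  by rewrite e hpc mul0r ltxx.
by rewrite -e hpc mulr0 ltxx.
Qed.

End S.

Unset Implicit Arguments.

Theorem mainTheorem15 (R : realType) (n : nat) :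
  (* 1 = xi_0 > xi_1 > ... > xi_{n+1} > xi_{n+2} = -1 *)
  [/\ xi R n 0 = 1, xi R n n.+2 = -1 &
      (forall k : nat, (k <= n.+1)%N -> xi R n k.+1 < xi R n k)] /\
  (* exactly one zero in each (xi_{k+1}, xi_k), 1 <= k <= n+1 *)
      (forall k : nat, (1 <= k <= n.+1)%N ->
         exists x : R, [/\ (xi R n k.+1 < x < xi R n k), root (S_odd R n) x &
           forall y : R, (xi R n k.+1 < y < xi R n k) -> root (S_odd R n) y -> y = x]) /\
  (* these zeros and x = 1 are all the zeros *)
  [/\ S_odd R n != 0, root (S_odd R n) 1,
      (forall x : R, root (S_odd R n) x ->
         x = 1 \/ exists2 k : nat, (1 <= k <= n.+1)%N & (xi R n k.+1 < x < xi R n k)) &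
  (* all zeros are simple *)
      (forall x : R, root (S_odd R n) x -> ~~ (('X - x%:P) ^+ 2 %| S_odd R n))].
Proof.
Proof.
set S := S_odd R n.
have chain := @xi_chain R n.
have anti := @xi_anti R n.
have sgn := @S_xi_sign R n.
have hS0 : S != 0.
  apply/eqP => h0; have := sgn n.+2 (leqnn _); rewrite /S in h0.
  by rewrite h0 horner0 mul0r ltxx.
have h1 : root S 1 by apply/eqP; exact: S_one.
have hroot : forall k, (1 <= k <= n.+1)%N ->
    exists x, xi R n k.+1 < x < xi R n k /\ root S x.
  move=> k /andP[hk1 hk2]; apply: poly_ivt_open; first exact: chain.
  have a1 : (0 < k.+1 <= n.+2)%N by [].
  have a2 : (0 < k <= n.+2)%N by rewrite hk1 ltnW.
  have := mulr_gt0 (sgn _ a1) (sgn _ a2).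
  rewrite [(-1) ^+ k.+1]exprS.
  have -> : (S_odd R n).[xi R n k.+1] * (-1 * (-1) ^+ k) * ((S_odd R n).[xi R n k] * (-1) ^+ k)
     = - ((S_odd R n).[xi R n k.+1] * (S_odd R n).[xi R n k]) * ((-1) ^+ k * (-1) ^+ k).
    ring.
  by rewrite sign_sq mulr1 oppr_gt0.
have : forall k, exists x : R, (1 <= k <= n.+1)%N ->
    xi R n k.+1 < x < xi R n k /\ root S x.
  move=> k; case: (boolP (1 <= k <= n.+1)%N) => h.
    by have [x hx] := hroot k h; exists x.
  by exists 0 => h'; case/negP: h.
move=> /boolp.choice [f hf].
have ford : forall i j, (1 <= i)%N -> (i < j)%N -> (j <= n.+1)%N -> f j < f i.
  move=> i j hi hij hj.
  have hj' : (1 <= j <= n.+1)%N by rewrite hj andbT (leq_trans hi (ltnW hij)).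
  have hi' : (1 <= i <= n.+1)%N by rewrite hi (leq_trans (ltnW hij) hj).
  case: (hf j hj') => /andP[_ a] _; case: (hf i hi') => /andP[b _] _.
  apply: lt_trans a _; apply: le_lt_trans b.
  by apply: anti; rewrite hij /= leqW.
have flt1 : forall i, (1 <= i <= n.+1)%N -> f i < 1.
  move=> i hi; case: (hf i hi) => /andP[_ a] _; apply: lt_le_trans a _.
  have e0 : xi R n 0 = 1 by [].
  rewrite -e0; apply: anti; rewrite leq0n /=; case/andP: hi => _ h; exact: leqW h.
have memL : forall y, y \in map f (iota 1 n.+1) ->
    exists2 i, (1 <= i <= n.+1)%N & y = f i.
  by move=> y /mapP [i hi ->]; exists i => //; move: hi; rewrite mem_iota add1n ltnS.
set L := 1 :: map f (iota 1 n.+1).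
have uL : uniq L.
  rewrite /L cons_uniq; apply/andP; split.
    by apply/negP => /memL [i hi e]; have := flt1 i hi; rewrite -e ltxx.
  rewrite map_inj_in_uniq ?iota_uniq //.
  move=> i j; rewrite !mem_iota !add1n !ltnS => hi hj e.
  case: (ltngtP i j) => // hij.
    by have := ford i j (andP hi).1 hij (andP hj).2; rewrite e ltxx.
  by have := ford j i (andP hj).1 hij (andP hi).2; rewrite e ltxx.
have rL : all (root S) L.
  rewrite /L; apply/allP => y; rewrite inE => /orP[/eqP -> //|/memL [i hi ->]]; exact: (hf i hi).2.
have sL : size L = n.+2 by rewrite /L /= size_map size_iota.
have memL2 : forall y, y \in L -> y = 1 \/ exists2 i, (1 <= i <= n.+1)%N & y = f i.
  by move=> y; rewrite inE => /orP[/eqP->|/memL]; [left|right].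
clearbody L.
have hsize : (size S <= n.+3)%N by exact: size_S.
have inL : forall y, root S y -> y \in L.
  move=> y hy; apply/negPn/negP => hn.
  have := @max_poly_roots _ S (y :: L) hS0.
  rewrite /= hy rL hn uL sL => /(_ isT isT) h.
  by move: hsize; rewrite leqNgt h.
split.
  split => //; first by rewrite /xi /= ltnn.
split.
  move=> k hk; exists (f k); split; [exact: (hf k hk).1 | exact: (hf k hk).2 |].
  move=> y hy hry; case: (memL2 y (inL y hry)) => [e|[i hi e]].
    have : xi R n k <= xi R n 0 by apply: anti; rewrite leq0n /= leqW //; case/andP: hk.
    have e0 : xi R n 0 = 1 by [].
    rewrite e0 => h; case/andP: hy => _ h'; move: h'; rewrite e.
    by move=> h''; have := lt_le_trans h'' h; rewrite ltxx.
  case: (ltngtP i k) => hik; last by rewrite e hik.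
    case: (hf i hi) => /andP[b _] _.
    have : xi R n k <= xi R n i.+1 by apply: anti; rewrite hik /= leqW //; case/andP: hk.
    case/andP: hy => _ h' h; have := lt_le_trans h' h; rewrite e => h2.
    by have := lt_trans h2 b; rewrite ltxx.
  case: (hf i hi) => /andP[_ b] _.
  have : xi R n i <= xi R n k.+1 by apply: anti; rewrite hik /= leqW //; case/andP: hi.
  case/andP: hy => h' _ h; have := le_lt_trans h h'; rewrite e => h2.
  by have := lt_trans b h2; rewrite ltxx.
split => //.
  move=> x hx; case: (memL2 x (inL x hx)) => [->|[i hi ->]]; first by left.
  by right; exists i => //; exact: (hf i hi).1.
move=> x hx; apply/negP => /dvdpP [q hq].
have hq0 : q != 0 by apply: contraNneq hS0 => q0; rewrite hq q0 mul0r.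
have hp0 : ('X - x%:P) ^+ 2 != 0 by rewrite -size_poly_eq0 size_exp_XsubC.
have hsq : size S = (size q).+2.
  by rewrite hq size_mul // size_exp_XsubC addnS addn2.
have xL := inL x hx.
have := @max_poly_roots _ q (rem x L) hq0.
rewrite rem_uniq // size_rem // sL /=.
have -> : all (root q) (rem x L).
  apply/allP => y; rewrite mem_rem_uniq // inE => /andP[hyx hyL].
  have := allP rL y hyL; rewrite /root hq hornerM horner_exp hornerXsubC.
  rewrite mulf_eq0 expf_eq0 /= subr_eq0 (negbTE hyx) orbF; exact.
move=> /(_ isT isT) h.
by move: hsize; rewrite hsq ltnS ltnS leqNgt h.
Qed.
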